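(* Let $n = |\mathcal S||\mathcal A|$ and let $w=(w_1,\dots,w_n)$ be weights with $w_i>0$ for all $i$ and $\sum_{i=1}^n w_i = 1$. For any $p\in(1,\infty)$ and any $Q,Q'\in\mathbb{R}^{n}$, \[ \|F_\lambda Q - F_\lambda Q'\|_{p,w} \le \gamma_{p,w}\,\|Q-Q'\|_{p,w},\qquad \text{where } \gamma_{p,w} := \gamma\, n^{1/p}\left(\frac{w_{\max}}{w_{\min}}\right)^{1/p}. \]
   Context: Consider a finite discounted MDP with state space $\mathcal S=\{1,\dots,|\mathcal S|\}$, action space $\mathcal A=\{1,\dots,|\mathcal A|\}$, transition probabilities $P(s'\mid s,a)$, expected one-step reward $R(s,a)$, and discount factor $\gamma\in[0,1)$. Q-functions are identified with vectors in $\mathbb{R}^n$, $n=|\mathcal S||\mathcal A|$, indexed by pairs $(s,a)$. For a temperature $\lambda>0$, the soft Bellman operator is \[(F_\lambda Q)(s,a) := R(s,a)+\gamma\sum_{s'\in\mathcal S}P(s'\mid s,a)\,\lambda\ln\Big(\sum_{u\in\mathcal A}\exp\big(Q(s',u)/\lambda\big)\Big).\] For $x\in\mathbb{R}^n$, the weighted norm is $\|x\|_{p,w}=\big(\sum_{i=1}^n w_i|x_i|^p\big)^{1/p}$, and $w_{\min}=\min_i w_i$, $w_{\max}=\max_i w_i$. *)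

(* Defs.v *)
From mathcomp Require Import all_boot all_order all_algebra.
From mathcomp Require Import reals sequences exp.
Set Implicit Arguments. Unset Strict Implicit. Unset Printing Implicit Defensive.
Import Order.TTheory GRing.Theory Num.Theory.
Local Open Scope ring_scope.

Definition SA (nS nA : nat) := ('I_nS * 'I_nA)%type.

(* Soft Bellman operator F_lambda. P s a s' = P(s'|s,a), Rw s a = R(s,a). *)
Definition softBellman (R : realType) (nS nA : nat)
  (P : 'I_nS -> 'I_nA -> 'I_nS -> R) (Rw : 'I_nS -> 'I_nA -> R)
  (gamma lam : R) (Q : SA nS nA -> R) : SA nS nA -> R :=
  fun sa => Rw sa.1 sa.2 + gamma * \sum_(s' < nS) P sa.1 sa.2 s' *
     (lam * ln (\sum_(u < nA) expR (Q (s', u) / lam))).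

Definition wpnorm (R : realType) (T : finType) (p : R) (w x : T -> R) : R :=
  (\sum_i w i * (`|x i| `^ p)) `^ (p^-1).

(* w_max for a nonnegative family (identity 0), and w_min (identity w_max,
   so that it is the true minimum on a nonempty index type). *)
Definition wmax (R : realType) (T : finType) (w : T -> R) : R :=
  \big[Num.max/0]_i w i.
Definition wmin (R : realType) (T : finType) (w : T -> R) : R :=
  \big[Num.min/wmax w]_i w i.

(* Main.v *)
Require Import Defs.
From mathcomp Require Import all_boot all_order all_algebra.
From mathcomp Require Import reals sequences exp.
From mathcomp Require Import ring lra.
Import Order.TTheory GRing.Theory Num.Theory.
Local Open Scope ring_scope.

Lemma lse_le (R : realType) (nA : nat) (a0 : 'I_nA) (lam M : R) (f g : 'I_nA -> R) :
  0 < lam -> (forall u, f u <= g u + M) ->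
  lam * ln (\sum_(u < nA) expR (f u / lam)) <=
  lam * ln (\sum_(u < nA) expR (g u / lam)) + M.
Proof.
move=> lam0 hfg.
have pos : forall h : 'I_nA -> R, 0 < \sum_(u < nA) expR (h u / lam).
  move=> h; rewrite (bigD1 a0) //=.
  by apply: ltr_wpDr; [apply: sumr_ge0 => i _; exact: expR_ge0 | exact: expR_gt0].
have h1 : \sum_(u < nA) expR (f u / lam) <=
          (\sum_(u < nA) expR (g u / lam)) * expR (M / lam).
  rewrite mulr_suml; apply: ler_sum => u _.
  rewrite -expRD ler_expR -mulrDl ler_pM2r ?invr_gt0 //.
have h2 := h1; rewrite -(ler_ln (pos f)) in h2; last first.
  by rewrite posrE mulr_gt0 ?pos ?expR_gt0.
rewrite lnM ?posrE ?pos ?expR_gt0 // expRK in h2.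
have := ler_wpM2l (ltW lam0) h2.
rewrite mulrDr mulrCA divff ?mulr1 ?gt_eqF //.
Qed.

Theorem proposition1 (R : realType) (nS nA : nat)
  (P : 'I_nS -> 'I_nA -> 'I_nS -> R) (Rw : 'I_nS -> 'I_nA -> R)
  (gamma lam : R) (w : SA nS nA -> R) (p : R) (Q Q' : SA nS nA -> R) :
  (forall s a s', 0 <= P s a s') ->
  (forall s a, \sum_(s' < nS) P s a s' = 1) ->
  0 <= gamma -> gamma < 1 -> 0 < lam ->
  (forall i, 0 < w i) -> \sum_i w i = 1 ->
  1 < p ->
  wpnorm p w (fun i => softBellman P Rw gamma lam Q i - softBellman P Rw gamma lam Q' i)
  <= gamma * ((nS * nA)%:R `^ (p^-1)) * ((wmax w / wmin w) `^ (p^-1))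
     * wpnorm p w (fun i => Q i - Q' i).
Proof.
move=> P0 P1 g0 g1 lam0 w0 w1 p1.
have p0 : 0 < p by apply: lt_trans p1.
have pi0 : 0 <= p^-1 by rewrite invr_ge0 ltW.
have ppi : p * p^-1 = 1 by rewrite divff // gt_eqF.
have rt : forall x : R, 0 <= x -> (x `^ p) `^ p^-1 = x.
  by move=> x x0; rewrite -powRrM ppi powRr1.
case: (pickP (@predT (SA nS nA))) => [i0 _ | h]; last first.
  by move: w1; rewrite big_pred0 // => /eqP; rewrite eq_sym oner_eq0.
have wmax0 : 0 < wmax w.
  by apply: (lt_le_trans (w0 i0)); rewrite /wmax; exact: le_bigmax.
have wmin0 : 0 < wmin w.
  rewrite /wmin; apply: (big_ind (fun x => 0 < x)) => // x y hx hy.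
  by rewrite lt_min hx hy.
have wminle : forall i, wmin w <= w i by move=> i; rewrite /wmin; exact: bigmin_le.
have wmaxle : forall i, w i <= wmax w by move=> i; rewrite /wmax; exact: le_bigmax.
have Nw : 1 <= (nS * nA)%:R * wmax w.
  have : \sum_i w i <= \sum_(i : SA nS nA) wmax w.
    by apply: ler_sum => i _; exact: wmaxle.
  by rewrite w1 sumr_const card_prod !card_ord mulr_natl.
set S := \sum_i w i * `|Q i - Q' i| `^ p.
have S0 : 0 <= S by apply: sumr_ge0 => i _; rewrite mulr_ge0 ?powR_ge0 ?ltW.
set M := (S / wmin w) `^ p^-1.
have M0 : 0 <= M by exact: powR_ge0.
have he : forall j, `|Q j - Q' j| <= M.
  move=> j; rewrite -(rt _ (normr_ge0 _)); apply: ge0_ler_powR => //.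
  - by rewrite nnegrE powR_ge0.
  - by rewrite nnegrE divr_ge0 // ltW.
  rewrite ler_pdivlMr //.
  apply: (le_trans (ler_wpM2l (powR_ge0 _ _) (wminle j))).
  rewrite mulrC /S (bigD1 j) //=; apply: ler_wpDr; last exact: lexx.
  by apply: sumr_ge0 => i _; rewrite mulr_ge0 ?powR_ge0 ?ltW.
have hd : forall i, `|softBellman P Rw gamma lam Q i - softBellman P Rw gamma lam Q' i|
                      <= gamma * M.
  move=> [s a]; rewrite /softBellman /=.
  rewrite opprD addrACA subrr add0r -mulrBr -sumrB normrM ger0_norm //; apply: ler_wpM2l => //.
  apply: (le_trans (ler_norm_sum _ _ _)).
  rewrite -[M]mul1r -(P1 s a) mulr_suml; apply: ler_sum => s' _.
  rewrite -mulrBr normrM ger0_norm //; apply: ler_wpM2l => //.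
  have h1 := @lse_le R nA i0.2 lam M (fun u => Q' (s', u)) (fun u => Q (s', u)) lam0.
  have h2 := @lse_le R nA i0.2 lam M (fun u => Q (s', u)) (fun u => Q' (s', u)) lam0.
  have e1 : forall u, Q' (s', u) <= Q (s', u) + M.
    move=> u; have := he (s', u); rewrite ler_norml => /andP[? ?]; lra.
  have e2 : forall u, Q (s', u) <= Q' (s', u) + M.
    move=> u; have := he (s', u); rewrite ler_norml => /andP[? ?]; lra.
  have := h1 e1; have := h2 e2; rewrite ler_norml /=; move=> ? ?.
  apply/andP; split; lra.
have gM0 : 0 <= gamma * M by rewrite mulr_ge0.
apply: (@le_trans _ _ (gamma * M)).
  rewrite /wpnorm -{1}(rt _ gM0); apply: ge0_ler_powR => //.
  - by rewrite nnegrE sumr_ge0 // => i _; rewrite mulr_ge0 ?powR_ge0 ?ltW.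
  - by rewrite nnegrE powR_ge0.
  rewrite -[X in _ <= X]mul1r -w1 mulr_suml; apply: ler_sum => i _.
  apply: ler_wpM2l; first exact: ltW.
  have := @ge0_ler_powR R p (ltW p0) _ _ _ _ (hd i).
  by apply; rewrite nnegrE.
rewrite -!mulrA; apply: ler_wpM2l; first exact: g0.
have r0 : 0 <= wmax w / wmin w by rewrite divr_ge0 // ltW.
have N0 : 0 <= (nS * nA)%:R :> R by exact: ler0n.
rewrite /wpnorm -/S -powRM // -powRM; last by rewrite mulr_ge0.
rewrite /M; apply: ge0_ler_powR => //.
- by rewrite nnegrE divr_ge0 // (ltW wmin0).
- by rewrite nnegrE (mulr_ge0 N0 (mulr_ge0 r0 S0)).
have -> : (nS * nA)%:R * (wmax w / wmin w * S) = ((nS * nA)%:R * wmax w) * (S / wmin w).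
  by rewrite !mulrA; ring.
by apply: ler_peMl => //; rewrite divr_ge0 // (ltW wmin0).
exact: ler0n.
Qed.
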